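(* Let $G=(V,S,\sigma,w,\theta,\pi)$ be a restaking network with $\theta(s)>0$ for all $s\in S$. Suppose that for every validator $v\in V$ $$\sum_{s\in S}\frac{w(v,s)}{\sum_{v'\in V}w(v',s)}\cdot\frac{\pi(s)}{\theta(s)}<\sigma(v),$$ and for every service $s\in S$ $$\sum_{v\in V}w(v,s)>\frac{\pi(s)}{\theta(s)}.$$ Then there is no profitable attack in $G$ (equivalently, $G$ is cryptoeconomically secure).
   Context: A restaking network is a tuple $G=(V,S,\sigma,w,\theta,\pi)$ with finite nonempty validator set $V$, finite service set $S$, stake $\sigma:V\to\mathbb{R}_{>0}$, allocation $w:V\times S\to\mathbb{R}_{\ge0}$ with $w(v,s)\le\sigma(v)$, thresholds $\theta:S\to[0,1]$ and prizes $\pi:S\to\mathbb{R}_{>0}$. An attack is $\alpha:V\times S\to\mathbb{R}_{\ge0}$ with $\alpha(v,s)\le w(v,s)$. Attacked services: $S_\alpha=\{s:\sum_v\alpha(v,s)\ge\theta(s)\sum_v w(v,s)\}$. Validator cost $c_v(\alpha)=\min(\sigma(v),\sum_{s\in S_\alpha}\alpha(v,s))$, total cost $C(\alpha)=\sum_v c_v(\alpha)$, prize $\Pi(\alpha)=\sum_{s\in S_\alpha}\pi(s)$. The attack is profitable if $S_\alpha\ne\emptyset$ and $C(\alpha)\le\Pi(\alpha)$. (A network is cryptoeconomically secure iff no profitable attack exists.) *)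

(* Defs.v *)
From HB Require Import structures.
From mathcomp Require Import all_boot all_order all_algebra.
Set Implicit Arguments. Unset Strict Implicit. Unset Printing Implicit Defensive.
Import Order.TTheory GRing.Theory Num.Theory.
Local Open Scope ring_scope.

Section Restaking.
Variables (R : realFieldType) (V S : finType).

Definition restaking_network (sigma : V -> R) (w : V -> S -> R)
    (theta : S -> R) (pi : S -> R) : Prop :=
  (0 < #|V|)%N /\
  (forall v, 0 < sigma v) /\
  (forall v s, 0 <= w v s /\ w v s <= sigma v) /\
  (forall s, 0 <= theta s /\ theta s <= 1) /\
  (forall s, 0 < pi s).

Definition is_attack (w : V -> S -> R) (alpha : V -> S -> R) : Prop :=
  forall v s, 0 <= alpha v s /\ alpha v s <= w v s.

Definition attacked (w : V -> S -> R) (theta : S -> R) (alpha : V -> S -> R)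
    : {set S} :=
  [set s | theta s * (\sum_(v : V) w v s) <= \sum_(v : V) alpha v s].

Definition val_cost (sigma : V -> R) (w : V -> S -> R) (theta : S -> R)
    (alpha : V -> S -> R) (v : V) : R :=
  Num.min (sigma v) (\sum_(s in attacked w theta alpha) alpha v s).

Definition total_cost (sigma : V -> R) (w : V -> S -> R) (theta : S -> R)
    (alpha : V -> S -> R) : R :=
  \sum_(v : V) val_cost sigma w theta alpha v.

Definition prize (w : V -> S -> R) (theta : S -> R) (pi : S -> R)
    (alpha : V -> S -> R) : R :=
  \sum_(s in attacked w theta alpha) pi s.

Definition profitable (sigma : V -> R) (w : V -> S -> R) (theta : S -> R)
    (pi : S -> R) (alpha : V -> S -> R) : Prop :=
  attacked w theta alpha != set0 /\
  total_cost sigma w theta alpha <= prize w theta pi alpha.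

End Restaking.

(* Main.v *)
Require Import Defs.
From HB Require Import structures.
From mathcomp Require Import all_boot all_order all_algebra.
From mathcomp Require Import ring.
Import Order.TTheory GRing.Theory Num.Theory.
Local Open Scope ring_scope.

Theorem mainTheorem4 (R : realFieldType) (V S : finType)
    (sigma : V -> R) (w : V -> S -> R) (theta : S -> R) (pi : S -> R) :
  restaking_network sigma w theta pi ->
  (forall s, 0 < theta s) ->
  (forall v, \sum_(s : S) (w v s / (\sum_(v' : V) w v' s)) * (pi s / theta s)
             < sigma v) ->
  (forall s, pi s / theta s < \sum_(v : V) w v s) ->
  forall alpha : V -> S -> R, is_attack w alpha ->
    ~ profitable sigma w theta pi alpha.
Proof.
move=> [_ [Hsig [Hw [_ Hpi]]]] Hth Hv Hs alpha Ha [Hne Hle].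
set A := attacked w theta alpha in Hne Hle.
set W := fun s => \sum_(v : V) w v s.
have Wpos : forall s, 0 < W s.
  move=> s; apply: lt_trans (Hs s); exact: divr_gt0.
set r := fun s => pi s / theta s / W s.
have r0 : forall s, 0 <= r s.
  move=> s; apply: divr_ge0; [apply: divr_ge0; apply: ltW => //|exact: ltW].
have r1 : forall s, r s < 1.
  by move=> s; rewrite /r ltr_pdivrMr // mul1r.
have hA : forall s, s \in A -> theta s * W s <= \sum_v alpha v s.
  by move=> s; rewrite inE.
set p := fun v => \sum_(s in A) alpha v s * r s.
have p_sig : forall v, p v < sigma v.
  move=> v; apply: le_lt_trans (Hv v).
  apply: (@le_trans _ _ (\sum_(s in A) w v s * r s)).
    apply: ler_sum => s _; apply: ler_wpM2r => //; exact: (Ha v s).2.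
  apply: (@le_trans _ _ (\sum_s w v s * r s)).
    rewrite [X in _ <= X](bigID (fun s => s \in A)) /= lerDl.
    apply: sumr_ge0 => s _; apply: mulr_ge0 => //; exact: (Hw v s).1.
  apply: ler_sum => s _; rewrite /r -/(W s) mulrA mulrAC le_refl //.
have p_al : forall v, p v <= \sum_(s in A) alpha v s.
  move=> v; apply: ler_sum => s _; rewrite -[X in _ <= X]mulr1.
  apply: ler_wpM2l; [exact: (Ha v s).1 | exact: ltW].
have p_c : forall v, p v <= val_cost sigma w theta alpha v.
  move=> v; rewrite /val_cost le_min (ltW (p_sig v)) p_al //.
have sum_p : prize w theta pi alpha <= \sum_v p v.
  rewrite /p exchange_big /prize -/A; apply: ler_sum => s sA.
  rewrite -big_distrl /= (@le_trans _ _ (theta s * W s * r s)) //.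
    have t0 := Hth s; have w0 := Wpos s.
    rewrite /r; rewrite le_eqVlt; apply/orP; left; apply/eqP; field; rewrite ?gt_eqF //; exact/andP.
  apply: ler_wpM2r => //; exact: hA.
case/set0Pn: Hne => s0 s0A.
case: (pickP (fun v => 0 < alpha v s0)) => [v0 Hv0|H]; last first.
  have : \sum_v alpha v s0 <= 0.
    by apply: sumr_le0 => v _; move: (H v) => /negbT; rewrite -leNgt.
  apply/negP; rewrite -ltNge; apply: lt_le_trans (hA _ s0A).
  exact: mulr_gt0.
have strict : p v0 < val_cost sigma w theta alpha v0.
  rewrite /val_cost lt_min p_sig /=.
  rewrite /p (bigD1 s0) //= [X in _ < X](bigD1 s0) //=.
  apply: ltr_leD.
    by rewrite -[X in _ < X]mulr1 ltr_pM2l.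
  apply: ler_sum => s _; rewrite -[X in _ <= X]mulr1.
  apply: ler_wpM2l; [exact: (Ha v0 s).1 | exact: ltW].
have : \sum_v p v < total_cost sigma w theta alpha.
  rewrite /total_cost (bigD1 v0) //= [X in _ < X](bigD1 v0) //=.
  apply: ltr_leD => //; apply: ler_sum => v _; exact: p_c.
move=> H; have := lt_le_trans (le_lt_trans sum_p H) Hle.
by rewrite ltxx.
Qed.
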